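(* Let $X,Y\in\mathbb{S}^2_{++}$. Then $X\#_tY=X*_tY$ for all $t\in[0,1]$, where $X\#_tY=X^{1/2}(X^{-1/2}YX^{-1/2})^tX^{1/2}$ (all powers being the principal powers of symmetric positive definite matrices).
   Context: $\mathbb{S}^n_{++}$ denotes the set of real symmetric positive definite $n\times n$ matrices. For $X,Y\in\mathbb{S}^n_{++}$ the matrix $YX^{-1}$ has real positive eigenvalues; let $\alpha=\lambda_{\min}(YX^{-1})$ and $\beta=\lambda_{\max}(YX^{-1})$. For $0<\alpha\le\beta$ and $t\in\mathbb{R}$ set $\varphi_{\alpha\beta}(t)=\frac{\beta^t-\alpha^t}{\beta-\alpha}$ and $\psi_{\alpha\beta}(t)=\frac{\beta\alpha^t-\alpha\beta^t}{\beta-\alpha}$ if $\beta>\alpha$, and $\varphi_{\alpha\beta}(t)=t\alpha^{t-1}$, $\psi_{\alpha\beta}(t)=(1-t)\alpha^t$ if $\beta=\alpha$. The Thompson geodesic from $X$ to $Y$ is $X*_tY=\varphi_{\alpha\beta}(t)\,Y+\psi_{\alpha\beta}(t)\,X$. *)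

(* Defs.v *)
From HB Require Import structures.
From mathcomp Require Import all_boot all_order all_algebra.
From mathcomp Require Import boolp classical_sets reals exp.
From Stdlib Require Import ClassicalEpsilon.
Set Implicit Arguments. Unset Strict Implicit. Unset Printing Implicit Defensive.
Import Order.TTheory GRing.Theory Num.Theory.
Local Open Scope ring_scope.

Definition spd (R : realType) (n : nat) (A : 'M[R]_n) : Prop :=
  A^T = A /\ forall v : 'rV[R]_n, v != 0 -> 0 < (v *m A *m v^T) 0 0.

Definition spd_decomp (R : realType) (n : nat) (A : 'M[R]_n)
  (p : 'M[R]_n * 'rV[R]_n) : Prop :=
  p.1 *m p.1^T = 1%:M /\ (forall i, 0 < p.2 0 i) /\
  A = p.1^T *m diag_mx p.2 *m p.1.

(* Principal real power A^t of a symmetric positive definite matrix: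
   U^T diag(d_i^t) U for a spectral decomposition (independent of the choice);
   0 if A has no such decomposition (i.e. A is not SPD). *)
Definition mxpowR (R : realType) (n : nat) (A : 'M[R]_n) (t : R) : 'M[R]_n :=
  let p := epsilon (inhabits (0, 0)) (spd_decomp A) in
  if pselect (exists q, spd_decomp A q) then
    p.1^T *m diag_mx (\row_i (p.2 0 i `^ t)) *m p.1
  else 0.

Definition geomean (R : realType) (n : nat) (X Y : 'M[R]_n) (t : R) : 'M[R]_n :=
  mxpowR X (2^-1) *m
  mxpowR (mxpowR X (- 2^-1) *m Y *m mxpowR X (- 2^-1)) t *m
  mxpowR X (2^-1).

Definition is_lambda_min (R : realType) (n : nat) (M : 'M[R]_n) (a : R) :=
  eigenvalue M a /\ forall mu, eigenvalue M mu -> a <= mu.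
Definition is_lambda_max (R : realType) (n : nat) (M : 'M[R]_n) (b : R) :=
  eigenvalue M b /\ forall mu, eigenvalue M mu -> mu <= b.

Definition phi_ab (R : realType) (a b t : R) : R :=
  if b != a then (b `^ t - a `^ t) / (b - a) else t * a `^ (t - 1).
Definition psi_ab (R : realType) (a b t : R) : R :=
  if b != a then (b * a `^ t - a * b `^ t) / (b - a) else (1 - t) * a `^ t.

(* Thompson geodesic X *_t Y with a = lambda_min(Y X^-1), b = lambda_max(Y X^-1). *)
Definition thompson (R : realType) (n : nat) (X Y : 'M[R]_n) (a b t : R) :=
  phi_ab a b t *: Y + psi_ab a b t *: X.

(* Main.v *)
Require Import Defs.
From HB Require Import structures.
From mathcomp Require Import all_boot all_order all_algebra.
From mathcomp Require Import boolp classical_sets reals exp.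
From Stdlib Require Import ClassicalEpsilon.
From mathcomp Require Import ring lra.
Set Implicit Arguments. Unset Strict Implicit. Unset Printing Implicit Defensive.
Import Order.TTheory GRing.Theory Num.Theory.
Local Open Scope ring_scope.

Definition pw (R : realType) (n : nat) (p : 'M[R]_n * 'rV[R]_n) (t : R) : 'M[R]_n :=
  p.1^T *m diag_mx (\row_i (p.2 0 i `^ t)) *m p.1.

Lemma mxpowR_eq (R : realType) (n : nat) (A : 'M[R]_n) p0 : spd_decomp A p0 ->
  exists p, spd_decomp A p /\ forall t, mxpowR A t = pw p t.
Proof.
move=> H0.
have Hex : exists q, spd_decomp A q by exists p0.
exists (epsilon (inhabits (0, 0)) (spd_decomp A)); split.
  exact: epsilon_spec.
by move=> t; rewrite /mxpowR; case: pselect.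
Qed.

Lemma pwM (R : realType) (n : nat) (p : 'M[R]_n * 'rV[R]_n) s r :
  p.1 *m p.1^T = 1%:M -> (forall i, 0 < p.2 0 i) -> pw p s *m pw p r = pw p (s + r).
Proof.
move=> HU Hd; rewrite /pw !mulmxA -[_ *m p.1 *m p.1^T]mulmxA HU mulmx1.
rewrite -[_ *m diag_mx _ *m diag_mx _]mulmxA mulmx_diag.
suff -> : \row_j ((\row_i (p.2 0 i `^ s)) 0 j * (\row_i (p.2 0 i `^ r)) 0 j) =
   \row_i (p.2 0 i `^ (s + r)) by [].
apply/rowP => i; rewrite !mxE.
have H : (s + r == 0) ==> (p.2 0 i != 0) by rewrite (gt_eqF (Hd i)) implybT.
by rewrite (powRD H).
Qed.

Lemma pw1 (R : realType) (n : nat) (A : 'M[R]_n) p : spd_decomp A p -> pw p 1 = A.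
Proof.
case=> HU [Hd ->]; rewrite /pw.
suff -> : \row_i (p.2 0 i `^ 1) = p.2 by [].
by apply/rowP => i; rewrite !mxE powRr1 // ltW.
Qed.

Lemma pw0 (R : realType) (n : nat) (p : 'M[R]_n * 'rV[R]_n) :
  p.1 *m p.1^T = 1%:M -> pw p 0 = 1%:M.
Proof.
move=> HU; rewrite /pw.
have -> : \row_i (p.2 0 i `^ 0) = const_mx 1 by apply/rowP => i; rewrite !mxE powRr0.
by rewrite diag_const_mx mulmx1 (mulmx1C HU).
Qed.

Lemma pwT (R : realType) (n : nat) (p : 'M[R]_n * 'rV[R]_n) t : (pw p t)^T = pw p t.
Proof. by rewrite /pw !trmx_mul trmxK tr_diag_mx mulmxA. Qed.
Lemma ord2 (i : 'I_2) : i = 0 \/ i = 1.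
Proof. case: i => [[|[|//]] Hi]; [left|right]; exact/val_inj. Qed.

Lemma ord1' (i : 'I_1) : i = 0.
Proof. exact: ord1. Qed.

Lemma mul2 (R : comPzRingType) m p (A : 'M[R]_(m, 2)) (B : 'M[R]_(2, p)) i j :
  (A *m B) i j = A i 0 * B 0 j + A i 1 * B 1 j.
Proof. rewrite mxE !big_ord_recl big_ord0 addr0.
by congr (A i _ * B _ j + A i _ * B _ j); apply/val_inj. Qed.

Lemma mx2P (R : Type) (A B : 'M[R]_2) :
  A 0 0 = B 0 0 -> A 0 1 = B 0 1 -> A 1 0 = B 1 0 -> A 1 1 = B 1 1 -> A = B.
Proof.
move=> H1 H2 H3 H4; apply/matrixP => i j.
by case: (ord2 i) => ->; case: (ord2 j) => ->.
Qed.

Definition mk2 (R : Type) (x y z w : R) : 'M[R]_2 :=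
  \matrix_(i, j) (if (i : nat) == 0%N then (if (j : nat) == 0%N then x else y)
                  else (if (j : nat) == 0%N then z else w)).

Lemma mk2E (R : Type) (x y z w : R) :
  ((mk2 x y z w) 0 0 = x) * ((mk2 x y z w) 0 1 = y) *
  ((mk2 x y z w) 1 0 = z) * ((mk2 x y z w) 1 1 = w).
Proof. by rewrite !mxE. Qed.

Definition mkr (R : Type) (x y : R) : 'rV[R]_2 :=
  \row_j (if (j : nat) == 0%N then x else y).

Lemma mkrE (R : Type) (x y : R) : ((mkr x y) 0 0 = x) * ((mkr x y) 0 1 = y).
Proof. by rewrite !mxE. Qed.

Lemma diag2E (R : realType) (d : 'rV[R]_2) :
  ((diag_mx d) 0 0 = d 0 0) * ((diag_mx d) 0 1 = 0) *
  ((diag_mx d) 1 0 = 0) * ((diag_mx d) 1 1 = d 0 1).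
Proof. by rewrite !mxE /= ?mulr1n ?mulr0n. Qed.

Lemma quad2 (R : realType) (A : 'M[R]_2) (v : 'rV[R]_2) :
  (v *m A *m v^T) 0 0 = v 0 0 * (v 0 0 * A 0 0 + v 0 1 * A 1 0)
                      + v 0 1 * (v 0 0 * A 0 1 + v 0 1 * A 1 1).
Proof. rewrite !mul2 !mxE; ring. Qed.

Lemma spd2_facts (R : realType) (A : 'M[R]_2) : spd A ->
  A 1 0 = A 0 1 /\ 0 < A 0 0 /\ 0 < A 1 1 /\ A 0 1 ^+ 2 < A 0 0 * A 1 1.
Proof.
case=> HT Hpos.
have Hs : A 1 0 = A 0 1 by rewrite -{1}HT mxE.
have H1 := Hpos (mkr 1 0).
rewrite quad2 !mkrE in H1.
have H1' : 0 < A 0 0.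
  suff: 0 < 1 * (1 * A 0 0 + 0 * A 1 0) + 0 * (1 * A 0 1 + 0 * A 1 1) by rewrite !mul1r !mul0r !addr0.
  apply: H1; apply/eqP => /rowP /(_ 0); rewrite !mxE /=; apply/eqP; exact: oner_neq0.
have H2 : 0 < A 1 1.
  have := Hpos (mkr 0 1); rewrite quad2 !mkrE.
  rewrite !mul1r !mul0r !add0r; apply.
  apply/eqP => /rowP /(_ 1); rewrite !mxE /=; apply/eqP; exact: oner_neq0.
have H3 : 0 < A 0 0 * (A 0 0 * A 1 1 - A 0 1 ^+ 2).
  have := Hpos (mkr (A 0 1) (- A 0 0)); rewrite quad2 !mkrE Hs.
  have -> : A 0 1 * (A 0 1 * A 0 0 + - A 0 0 * A 0 1) +
      - A 0 0 * (A 0 1 * A 0 1 + - A 0 0 * A 1 1) = A 0 0 * (A 0 0 * A 1 1 - A 0 1 ^+ 2) by ring.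
  apply; apply/eqP => /rowP /(_ 1); rewrite !mxE /= => /eqP.
  by rewrite oppr_eq0 gt_eqF.
split=> //; split=> //; split=> //.
rewrite pmulr_rgt0 // subr_gt0 in H3; exact: H3.
Qed.
Lemma spd2_decomp (R : realType) (A : 'M[R]_2) : spd A -> exists p, spd_decomp A p.
Proof.
move=> HA; have [Hs [Hp [Hr Hdet]]] := spd2_facts HA.
set q := A 0 1 in Hs Hdet *.
set m := (A 0 0 + A 1 1) / 2.
set h := (A 0 0 - A 1 1) / 2.
have Ep : A 0 0 = m + h by rewrite /m /h; field.
have Er : A 1 1 = m - h by rewrite /m /h; field.
rewrite Ep Er in Hdet.
have Hm : 0 < m by rewrite /m; lra.
have [q0|qn0] := eqVneq q 0.
  exists (1%:M, mkr (m + h) (m - h)); split; first by rewrite trmx1 mulmx1.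
  split.
    move=> i; case: (ord2 i) => ->; rewrite !mkrE; nra.
  rewrite trmx1 mul1mx mulmx1 /=.
  apply: mx2P; rewrite ?diag2E; try (rewrite !mkrE).
  - exact Ep.
  - exact q0.
  - by rewrite Hs.
  - exact Er.
set s := Num.sqrt (h ^+ 2 + q ^+ 2).
have Hs0 : 0 <= s by apply: sqrtr_ge0.
have Hs2 : s ^+ 2 = h ^+ 2 + q ^+ 2 by rewrite sqr_sqrtr // addr_ge0 // sqr_ge0.
have Hq2 : 0 < q ^+ 2 by rewrite exprn_even_gt0.
set N := q ^+ 2 + (s - h) ^+ 2.
have HN : 0 < N by rewrite /N; have := sqr_ge0 (s - h); lra.
set k := (Num.sqrt N)^-1.
have Hk : k ^+ 2 * N = 1.
  rewrite /k exprVn sqr_sqrtr ?mulVf // ?gt_eqF //; exact: ltW.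
exists (k *: mk2 q (s - h) (- (s - h)) q, mkr (m + s) (m - s)); split => /=.
  apply: mx2P; rewrite !mul2 !mxE /= ?mulr1n ?mulr0n.
  - by rewrite -Hk /N; ring.
  - ring.
  - ring.
  - by rewrite -Hk /N; ring.
split.
  move=> i; case: (ord2 i) => ->; rewrite !mkrE; nra.
apply/esym; apply: mx2P; rewrite !mul2 !mxE /= ?mulr1n ?mulr0n ?mulr0 ?add0r ?addr0 ?mul0r.
- rewrite Ep; apply/eqP; rewrite -subr_eq0; apply/eqP.
  transitivity (k^+2 * (-(s-h)) * (s^+2 - h^+2 - q^+2) + (m+h) * (k^+2 * N - 1)).
    rewrite /N /q; ring.
  by rewrite Hs2 Hk; ring.
- apply/eqP; rewrite -subr_eq0; apply/eqP.
  transitivity (k^+2 * q * (s^+2 - h^+2 - q^+2) + q * (k^+2 * N - 1)).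
    rewrite /N /q; ring.
  by rewrite Hs2 Hk; ring.
- rewrite Hs; apply/eqP; rewrite -subr_eq0; apply/eqP.
  transitivity (k^+2 * q * (s^+2 - h^+2 - q^+2) + q * (k^+2 * N - 1)).
    rewrite /N /q; ring.
  by rewrite Hs2 Hk; ring.
- rewrite Er; apply/eqP; rewrite -subr_eq0; apply/eqP.
  transitivity (k^+2 * (s-h) * (s^+2 - h^+2 - q^+2) + (m-h) * (k^+2 * N - 1)).
    rewrite /N /q; ring.
  by rewrite Hs2 Hk; ring.
Qed.

Lemma key_scalar (R : realType) (a b x t : R) : 0 < a -> 0 < b -> (x = a \/ x = b) ->
  x `^ t = phi_ab a b t * x + psi_ab a b t.
Proof.
move=> Ha Hb Hx; rewrite /phi_ab /psi_ab.
have [Eba|ne] := eqVneq b a.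
  subst b; have -> : x = a by case: Hx.
  rewrite /=.
  have Hne : a != 0 by rewrite gt_eqF.
  have H1 : (t == 1) ==> (a != 0) by rewrite Hne implybT.
  by rewrite (powRB H1) powRr1 ?ltW //; field.
rewrite /=.
have Hba : b - a != 0 by rewrite subr_eq0.
by case: Hx => ->; field.
Qed.

Lemma decomp_eig (R : realType) (n : nat) (A : 'M[R]_n) p mu :
  spd_decomp A p -> eigenvalue A mu -> exists j, mu = p.2 0 j.
Proof.
case=> HU [Hd HA] /eigenvalueP [v Hv vn0].
have HUU := mulmx1C HU.
set z := v *m p.1^T.
have Hz : z *m diag_mx p.2 = mu *: z.
  have <- : v *m A *m p.1^T = z *m diag_mx p.2.
    by rewrite HA /z !mulmxA -[_ *m p.1 *m p.1^T]mulmxA HU mulmx1.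
  by rewrite Hv -scalemxAl.
have zn0 : z != 0.
  apply: contraNneq vn0 => z0.
  by rewrite -[v]mulmx1 -HUU mulmxA -/z z0 mul0mx.
have [j zj] : exists j, z 0 j != 0.
  apply/existsP; apply: contraNT zn0; rewrite negb_exists => /forallP H.
  apply/eqP/rowP => j; have := H j; rewrite negbK => /eqP ->; by rewrite mxE.
exists j.
have E : (z *m diag_mx p.2) 0 j = (mu *: z) 0 j by rewrite Hz.
rewrite mul_mx_diag [LHS]mxE [RHS]mxE in E.
apply: (mulfI zj); by rewrite [LHS]mulrC -E.
Qed.

Lemma decomp_eig2 (R : realType) (n : nat) (A : 'M[R]_n) p j :
  spd_decomp A p -> eigenvalue A (p.2 0 j).
Proof.
case=> HU [Hd HA]; apply/eigenvalueP.
exists (delta_mx 0 j *m p.1).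
  have HD : delta_mx 0 j *m diag_mx p.2 = p.2 0 j *: delta_mx (0 : 'I_1) j.
    rewrite mul_mx_diag; apply/matrixP => i k; rewrite !mxE.
    by case: (eqVneq k j) => [->|kj]; rewrite ?andbF ?mulr0 ?mul0r // mulrC.
  rewrite HA !mulmxA -[_ *m p.1 *m p.1^T]mulmxA HU mulmx1 HD.
  by rewrite -scalemxAl.
apply/eqP => H.
have := congr1 (fun M => M *m p.1^T) H; rewrite mul0mx -mulmxA HU mulmx1.
move/matrixP => /(_ 0 j); rewrite !mxE !eqxx /=.
move/eqP; by rewrite oner_eq0.
Qed.

Lemma eig_sim (R : realType) (n : nat) (B C P Q : 'M[R]_n) mu :
  P *m Q = 1%:M -> Q *m P = 1%:M -> C = Q *m B *m P -> eigenvalue B mu -> eigenvalue C mu.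
Proof.
move=> HPQ HQP -> /eigenvalueP [v Hv vn0]; apply/eigenvalueP.
exists (v *m P).
  by rewrite !mulmxA -[v *m P *m Q]mulmxA HPQ mulmx1 Hv scalemxAl.
apply: contraNneq vn0 => H.
by rewrite -[v]mulmx1 -HPQ mulmxA H mul0mx.
Qed.

Lemma half_sum (R : realType) : (2^-1 + 2^-1 : R) = 1.
Proof. by field. Qed.

Theorem proposition3p2 (R : realType) (X Y : 'M[R]_2) (a b : R) :
  spd X -> spd Y ->
  is_lambda_min (Y *m invmx X) a -> is_lambda_max (Y *m invmx X) b ->
  forall t : R, 0 <= t <= 1 -> geomean X Y t = thompson X Y a b t.
Proof.
move=> HXs HYs [Ha Hamin] [Hb Hbmax] t _.
have [p0 Hp0] := spd2_decomp HXs.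
have [pX [HpX HX]] := mxpowR_eq Hp0.
have [HUX [HdX _]] := HpX.
set P := pw pX (2^-1).
set Q := pw pX (- 2^-1).
have HPQ : P *m Q = 1%:M by rewrite /P /Q pwM // addrN pw0.
have HQP : Q *m P = 1%:M by rewrite /P /Q pwM // addNr pw0.
have HPP : P *m P = X by rewrite /P pwM // half_sum (pw1 HpX).
have HQT : Q^T = Q by rewrite /Q pwT.
have HinvX : invmx X = Q *m Q.
  have HXQ : X *m (Q *m Q) = 1%:M.
    by rewrite -HPP mulmxA -[P *m P *m Q]mulmxA HPQ mulmx1 HPQ.
  have [Xu _] := mulmx1_unit HXQ.
  by rewrite -[invmx X]mulmx1 -HXQ !mulmxA mulVmx // mul1mx.
have HXP' : mxpowR X (2^-1) = P by rewrite HX.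
have HXQ' : mxpowR X (- 2^-1) = Q by rewrite HX.
clearbody P Q.
pose M := Q *m Y *m Q.
have EM : M = Q *m Y *m Q by [].
clearbody M.
have HMs : spd M.
  case: HYs => HYT HYpos; split.
    by rewrite EM !trmx_mul HQT HYT mulmxA.
  move=> v vn0.
  have -> : v *m M *m v^T = (v *m Q) *m Y *m (v *m Q)^T.
    by rewrite EM !trmx_mul HQT !mulmxA.
  apply: HYpos; apply: contraNneq vn0 => H.
  by rewrite -[v]mulmx1 -HQP mulmxA H mul0mx.
have [p1 Hp1] := spd2_decomp HMs.
have [pM [HpM HMt]] := mxpowR_eq Hp1.
have [HUM [HdM HMd]] := HpM.
have EYM : Y *m invmx X = P *m M *m Q.
  by rewrite HinvX EM !mulmxA HPQ mul1mx.
have Einv : M = Q *m (Y *m invmx X) *m P.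
  by rewrite EYM !mulmxA HQP mul1mx -mulmxA HQP mulmx1.
have eigM : forall mu, eigenvalue (Y *m invmx X) mu -> exists j, mu = pM.2 0 j.
  move=> mu Hmu; apply: (decomp_eig HpM); exact: (eig_sim HPQ HQP Einv Hmu).
have eigY : forall j, eigenvalue (Y *m invmx X) (pM.2 0 j).
  move=> j; exact: (eig_sim HQP HPQ EYM (decomp_eig2 j HpM)).
have [ja Eja] := eigM a Ha.
have [jb Ejb] := eigM b Hb.
have Ha0 : 0 < a by rewrite Eja.
have Hb0 : 0 < b by rewrite Ejb.
have Hab : forall j, pM.2 0 j = a \/ pM.2 0 j = b.
  move=> j.
  have H1 := Hamin _ (eigY j).
  have H2 := Hbmax _ (eigY j).
  have Ha0' := Hamin _ (eigY 0); have Ha1' := Hamin _ (eigY 1).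
  have Hb0' := Hbmax _ (eigY 0); have Hb1' := Hbmax _ (eigY 1).
  case: (ord2 j) => ->; case: (ord2 ja) Eja => -> Ea; case: (ord2 jb) Ejb => -> Eb;
  rewrite ?Ea ?Eb; (try by left); (try by right); lra.
set ph := phi_ab a b t.
set ps := psi_ab a b t.
have HMt' : pw pM t = ph *: M + ps *: 1%:M.
  have Hrow : \row_i (pM.2 0 i `^ t) = ph *: pM.2 + ps *: const_mx 1.
    apply/rowP => i; rewrite !mxE mulr1; exact: key_scalar.
  have Hdiag : diag_mx (ph *: pM.2 + ps *: const_mx 1) = ph *: diag_mx pM.2 + ps *: 1%:M.
    apply/matrixP => i j; rewrite !mxE.
    by case: (eqVneq i j) => [->|ij]; rewrite ?mulr1n ?mulr0n ?mulr0 ?addr0 ?mulr1.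
  rewrite /pw Hrow Hdiag mulmxDr mulmxDl -!scalemxAr -!scalemxAl mulmx1 (mulmx1C HUM).
  by rewrite -HMd.
rewrite /geomean HXP' HXQ' -EM HMt HMt' /thompson -/ph -/ps.
rewrite mulmxDr mulmxDl -!scalemxAr -!scalemxAl mulmx1 HPP.
congr (_ *: _ + _).
by rewrite EM !mulmxA HPQ mul1mx -mulmxA HQP mulmx1.
Qed.
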